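(* Let $n\ge 2$, let $f:\{0,1\}^n\to\{0,1\}^n$ and $\alpha\in\{0,1\}$. Then every arc of $G(f^\alpha)$ (with its sign) is an arc of $G(f)$, i.e. $G(f^\alpha)$ is a subgraph of $G(f)$. Furthermore, if $G(f)$ has no arc from vertex $n$ to a vertex $i\neq n$, then $G(f^\alpha)=G(f)\setminus n$, the signed graph obtained from $G(f)$ by removing vertex $n$ and all arcs having $n$ as initial or final vertex.
   Context: For $x\in\{0,1\}^m$ and $j\in\{1,\dots,m\}$, $\overline{x}^j$ denotes $x$ with its $j$-th component switched. For $g=(g_1,\dots,g_m):\{0,1\}^m\to\{0,1\}^m$, the discrete Jacobian entries are $g_{ij}(x)=\frac{g_i(\overline{x}^j)-g_i(x)}{\overline{x}^j_j-x_j}\in\{-1,0,1\}$. The interaction graph $G(g)$ is the signed directed graph with vertex set $\{1,\dots,m\}$ having an arc from $j$ to $i$ of sign $s\in\{-1,1\}$ whenever $g_{ij}(x)=s$ for at least one $x\in\{0,1\}^m$ (both a positive and a negative arc between the same pair are allowed). For $\alpha\in\{0,1\}$, $f^\alpha:\{0,1\}^{n-1}\to\{0,1\}^{n-1}$ is defined by $f^\alpha(x)=(f_1(x,\alpha),\dots,f_{n-1}(x,\alpha))$. *)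

(* Defs.v *)
From mathcomp Require Import all_boot all_order all_algebra.
Set Implicit Arguments. Unset Strict Implicit. Unset Printing Implicit Defensive.
Import GRing.Theory Num.Theory.
Local Open Scope ring_scope.

(* A point of {0,1}^m is a finite function 'I_m -> bool (false = 0, true = 1);
   component j (1-based in the paper) is index j-1 here. *)
Definition pt (m : nat) := {ffun 'I_m -> bool}.

Definition flip (m : nat) (x : pt m) (j : 'I_m) : pt m :=
  [ffun k => if k == j then ~~ x k else x k].

Definition b2i (b : bool) : int := if b then 1 else 0.

(* discrete Jacobian entry g_ij(x) =
   (g_i(flip x j) - g_i(x)) / ((flip x j)_j - x_j).
   The denominator is +-1, so dividing by it equals multiplying by it. *)
Definition jac (m : nat) (g : pt m -> pt m) (i j : 'I_m) (x : pt m) : int :=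
  (b2i (g (flip x j) i) - b2i (g x i)) * (b2i (flip x j j) - b2i (x j)).

(* arc of G(g) from j to i with sign s (s = 1 or s = -1) *)
Definition sarc (m : nat) (g : pt m -> pt m) (j i : 'I_m) (s : int) : Prop :=
  exists x : pt m, jac g i j x = s.

(* (x, a) in {0,1}^n for x in {0,1}^(n-1): the last component is a *)
Definition ext (n : nat) (a : bool) (x : pt n.-1) : pt n :=
  [ffun k : 'I_n => if (insub (val k) : option 'I_n.-1) is Some k'
                     then x k' else a].

Definition emb (n : nat) (i : 'I_n.-1) : 'I_n := widen_ord (leq_pred n) i.

Definition restr (n : nat) (f : pt n -> pt n) (a : bool) (x : pt n.-1) : pt n.-1 :=
  [ffun i => f (ext a x) (emb i)].

(* Main.v *)
Require Import Defs.
From mathcomp Require Import all_boot all_order all_algebra.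
Local Open Scope ring_scope.

Lemma ext_emb n a (x : pt n.-1) k : ext a x (emb k) = x k.
Proof.
rewrite /ext ffunE (insubT (fun m => m < n.-1)%N (ltn_ord k)) /=.
by congr (x _); apply: val_inj.
Qed.

Lemma ext_last n a (x : pt n.-1) (l : 'I_n) : val l = n.-1 -> ext a x l = a.
Proof. by move=> hl; rewrite /ext ffunE insubN // hl ltnn. Qed.

Lemma flip_ext n a (x : pt n.-1) j : flip (ext a x) (emb j) = ext a (flip x j).
Proof.
apply/ffunP => k; rewrite /flip /ext !ffunE.
case: (ltnP (val k) n.-1) => hk.
  rewrite !(insubT (fun m => m < n.-1)%N hk) /= ffunE.
  have -> : (k == emb j) = (Sub (val k) hk == j :> 'I_n.-1) by [].
  done.
have -> : (k == emb j) = false.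
  by apply/negbTE/eqP => h; move: hk; rewrite h /= leqNgt ltn_ord.
by rewrite !insubN // -leqNgt.
Qed.

Lemma jac_restr n f a i j (x : pt n.-1) :
  jac (restr f a) i j x = jac f (emb i) (emb j) (ext a x).
Proof.
have E : forall y, restr f a y i = f (ext a y) (emb i) by move=> y; rewrite /restr ffunE.
have F : forall m (y : pt m) k, flip y k k = ~~ y k by move=> m y k; rewrite /flip ffunE eqxx.
by rewrite /jac !E !F -flip_ext ext_emb.
Qed.

Lemma jac_vals m (g : pt m -> pt m) i j x :
  jac g i j x = 1 \/ jac g i j x = -1 \/ jac g i j x = 0.
Proof.
rewrite /jac /flip ffunE eqxx.
by case: (x j); case: (g _ i); case: (g x i); rewrite /b2i /=; auto.
Qed.

Theorem lemma1 (n : nat) (hn : (2 <= n)%N) (f : pt n -> pt n) (a : bool) :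
  (* G(f^a) is a subgraph of G(f) *)
  (forall (j i : 'I_n.-1) (s : int), (s = 1 \/ s = -1) ->
     sarc (restr f a) j i s -> sarc f (emb j) (emb i) s) /\
  (* if G(f) has no sarc from vertex n to a vertex i <> n, then G(f^a) = G(f) \ n *)
  ((forall (v i : 'I_n) (s : int), val v = n.-1 -> i != v -> (s = 1 \/ s = -1) ->
       ~ sarc f v i s) ->
   forall (j i : 'I_n.-1) (s : int), (s = 1 \/ s = -1) ->
     (sarc (restr f a) j i s <-> sarc f (emb j) (emb i) s)).
Proof.
have part1 : forall (j i : 'I_n.-1) (s : int),
     sarc (restr f a) j i s -> sarc f (emb j) (emb i) s.
  by move=> j i s [x hx]; exists (ext a x); rewrite -jac_restr.
split; first by move=> j i s _; apply: part1.
move=> H j i s hs; split; first exact: part1.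
have hl : (n.-1 < n)%N by rewrite ltn_predL (leq_trans _ hn).
pose l := Ordinal hl.
have hil : emb i != l by apply/eqP => /(congr1 val) /= h; move: (ltn_ord i); rewrite h ltnn.
have hjl : emb j != l by apply/eqP => /(congr1 val) /= h; move: (ltn_ord j); rewrite h ltnn.
have inv : forall w, f (flip w l) (emb i) = f w (emb i).
  move=> w; have := jac_vals _ f (emb i) l w.
  case=> [h|[h|h]].
  - by exfalso; apply: (H l (emb i) 1 erefl hil (or_introl erefl)); exists w.
  - by exfalso; apply: (H l (emb i) (-1) erefl hil (or_intror erefl)); exists w.
  move: h; rewrite /jac /flip ffunE eqxx.
  by case: (w l); case: (f _ _); case: (f w _).
have flipC : forall w, flip (flip w l) (emb j) = flip (flip w (emb j)) l.
  move=> w; apply/ffunP => k; rewrite /flip !ffunE.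
  case: (eqVneq k l) => [->|hkl].
    have -> : (l == emb j) = false by apply/negbTE; rewrite eq_sym.
    by rewrite ?eqxx.
  by rewrite ?(negbTE hkl).
have key : forall w, jac f (emb i) (emb j) (flip w l) = jac f (emb i) (emb j) w.
  move=> w; rewrite /jac flipC !inv.
  have -> : flip w l (emb j) = w (emb j) by rewrite /flip ffunE (negbTE hjl).
  have -> : flip (flip w (emb j)) l (emb j) = flip w (emb j) (emb j)
    by rewrite /flip ffunE (negbTE hjl).
  done.
move=> [x hx].
pose x' : pt n.-1 := [ffun k => x (emb k)].
have xe : forall b k, ext b x' k = if k == l then b else x k.
  move=> b k; rewrite /ext ffunE.
  case: (ltnP (val k) n.-1) => hk.
    rewrite (insubT (fun m => m < n.-1)%N hk) /= ffunE.
    have -> : emb (Sub (val k) hk) = k by apply: val_inj.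
    have -> : (k == l) = false.
      by apply/negbTE/eqP => e; move: hk; rewrite e ltnn.
    done.
  rewrite insubN -?leqNgt //.
  have e : k = l.
    apply: val_inj => /=; apply/eqP; rewrite eqn_leq hk andbT.
    by rewrite -ltnS prednK ?ltn_ord ?(leq_trans _ hn).
  by rewrite e eqxx.
exists x'; rewrite jac_restr.
case: (eqVneq a (x l)) => [->|ha].
  have -> : ext (x l) x' = x.
    by apply/ffunP => k; rewrite xe; case: eqP => // ->.
  done.
have -> : ext a x' = flip x l.
  apply/ffunP => k; rewrite xe /flip ffunE; case: eqP => // ->.
  by move: ha; case: (a); case: (x l).
by rewrite key.
Qed.
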